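(* Let $(V,\Omega)$ be a finite-dimensional real symplectic vector space and let $A:V\to V$ be a linear map with $\Omega(Ax,y)+\Omega(x,Ay)=0$ for all $x,y\in V$ and $A^2=-I$. Let $\theta^A$ be the one-form on $V$ given by $\theta^A_z(v_z)=\frac{1}{2}\Omega(z-Az,v)$. Then ${\rm Aut}(V,\theta^A)=\{g\in{\rm Sp}(V,\Omega): gA=Ag\}$, where ${\rm Aut}(V,\theta^A)$ is the group of all diffeomorphisms $g:V\to V$ satisfying $g^*\theta^A=\theta^A$.
   Context: $V$ is a finite-dimensional real vector space and $\Omega$ a nonsingular alternating bilinear form on $V$. For $z,v\in V$, $v_z\in T_zV$ denotes the tangent vector at $z$ corresponding to $v$ under the canonical identification $T_zV\cong V$. Equivalently, $\theta^A=\theta^0+d\psi^A$ where $\theta^0_z(v_z)=\frac12\Omega(z,v)$ and $\psi^A(z)=\frac14\Omega(z,Az)$. For a smooth map $g:V\to V$, $(g^*\theta^A)_z(v_z)=\frac12\Omega(g(z)-Ag(z),g'_z v)$, where $g'_z$ is the derivative of $g$ at $z$. ${\rm Sp}(V,\Omega)$ is the group of linear automorphisms of $V$ preserving $\Omega$. *)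

(* Defs.v *)
From HB Require Import structures.
From mathcomp Require Import all_boot all_order all_algebra.
From mathcomp Require Import all_classical all_reals all_analysis.
Set Implicit Arguments. Unset Strict Implicit. Unset Printing Implicit Defensive.
Import Order.TTheory GRing.Theory Num.Theory.
Import numFieldNormedType.Exports.
Local Open Scope ring_scope.

Section Defs.
Variables (R : realType) (n : nat).
Local Notation V := 'rV[R]_n.

Definition sform (Om : 'M[R]_n) (x y : V) : R := (x *m Om *m y^T) 0 0.

Definition symplectic_form (Om : 'M[R]_n) : Prop :=
  (forall x : V, sform Om x x = 0) /\ Om \in unitmx.

Definition linmx (M : 'M[R]_n) : V -> V := fun x => x *m M.

Definition thetaA (Om A : 'M[R]_n) (z v : V) : R :=
  2^-1 * sform Om (z - linmx A z) v.

Fixpoint iter_deriv (f : V -> V) (vs : seq V) : V -> V :=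
  match vs with
  | [::] => f
  | v :: vs' => fun z => 'D_v (iter_deriv f vs') z
  end.

(* C^infinity : all iterated directional derivatives exist and are
   (Frechet) differentiable everywhere *)
Definition smooth (f : V -> V) : Prop :=
  forall (vs : seq V) (z : V), differentiable (iter_deriv f vs) z.

Definition diffeomorphism (g : V -> V) : Prop :=
  smooth g /\ exists h : V -> V, [/\ cancel g h, cancel h g & smooth h].

(* (g^* theta)_z (v_z) = theta_{g z} (g'_z v) *)
Definition preserves_theta (Om A : 'M[R]_n) (g : V -> V) : Prop :=
  forall z v : V, thetaA Om A (g z) ('d g z v) = thetaA Om A z v.

Definition Aut_theta (Om A : 'M[R]_n) : set (V -> V) :=
  [set g | diffeomorphism g /\ preserves_theta Om A g].

Definition Sp (Om : 'M[R]_n) : set (V -> V) :=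
  [set g | exists M : 'M[R]_n, [/\ M \in unitmx, g = linmx M &
     forall x y : V, sform Om (g x) (g y) = sform Om x y]].

End Defs.

(* Main.v *)
Require Import Defs.
From HB Require Import structures.
From mathcomp Require Import all_boot all_order all_algebra.
From mathcomp Require Import all_classical all_reals all_analysis.
From mathcomp Require Import ring lra.
Set Implicit Arguments. Unset Strict Implicit. Unset Printing Implicit Defensive.
Import Order.TTheory GRing.Theory Num.Theory.
Import numFieldNormedType.Exports.
Local Open Scope ring_scope.
Local Open Scope classical_set_scope.

Section Gen.
Variable R : realType.

Lemma is_derive_cvgP (V W : normedModType R) (f : V -> W) x v l :
  (fun h : R => h^-1 *: (f (h *: v + x) - f x)) @ 0^' --> l -> is_derive x v f l.
Proof.
move=> H; have d : derivable f x v by apply/cvg_ex; exists l.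
by apply: DeriveDef => //; apply: cvg_lim.
Qed.

Lemma is_derive_cvg (V W : normedModType R) (f : V -> W) x v l :
  is_derive x v f l -> (fun h : R => h^-1 *: (f (h *: v + x) - f x)) @ 0^' --> l.
Proof. by case=> d <-; exact: d. Qed.

Lemma is_derive_coord (V : normedModType R) m n (F : V -> 'M[R]_(m, n)) x v dF i j :
  is_derive x v F dF -> is_derive x v (fun y => F y i j) (dF i j).
Proof.
move=> /is_derive_cvg H; apply: is_derive_cvgP.
have H2 := continuous_cvg _ (@coord_continuous R m n i j dF) H.
have E : (fun h : R => h^-1 *: (F (h *: v + x) i j - F x i j)) = (fun y : 'M[R]_(m,n) => y i j) \o (fun h : R => h^-1 *: (F (h *: v + x) - F x)).
  by apply/funext => h; rewrite /= !mxE.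
rewrite E; exact: H2.
Qed.

Lemma is_deriveZl (V W : normedModType R) (k : V -> R) (c : W) x v dk :
  is_derive x v k dk -> is_derive x v (fun y => k y *: c) (dk *: c).
Proof.
move=> /is_derive_cvg H; apply: is_derive_cvgP.
have H2 := cvgZr_tmp (a:=c) H.
have E : (fun h : R => h^-1 *: (k (h *: v + x) *: c - k x *: c)) = (fun h : R => (h^-1 *: (k (h *: v + x) - k x)) *: c).
  by apply/funext => h; rewrite /= -scalerBl scalerA.
rewrite E; exact: H2.
Qed.

Lemma is_derive_comp1 (V W : normedModType R) (f : V -> W) (h : R -> V) x dh :
  differentiable f (h x) -> is_derive x 1 h dh ->
  is_derive x 1 (f \o h) ('d f (h x) dh).
Proof.
move=> df [dh1 <-].
have dh' : differentiable h x by apply/derivable1_diffP.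
have dfh : differentiable (f \o h) x by apply: differentiable_comp.
apply: DeriveDef; first exact: diff_derivable.
by rewrite (deriveE _ dfh) (diff_comp dh' df) /= (deriveE _ dh').
Qed.

Lemma line_is_derive (V : normedModType R) (f : V -> R) (p v : V) (Df : V -> R) (t : R) :
  (forall y, is_derive y v f (Df y)) ->
  is_derive t 1 (fun s : R => f (p + s *: v)) (Df (p + t *: v)).
Proof.
move=> H; apply: is_derive_cvgP.
have H2 := is_derive_cvg (H (p + t *: v)).
have E : (fun h : R => h^-1 *: (f (p + (h *: 1 + t) *: v) - f (p + t *: v))) = (fun h : R => h^-1 *: (f (h *: v + (p + t *: v)) - f (p + t *: v))).
  by apply/funext => h; rewrite /= [_%:A]mulr1 scalerDl addrCA addrA.
rewrite E; exact: H2.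
Qed.

End Gen.

Section Schwarz.
Variable R : realType.

Lemma two_mvt (V : normedModType R) (f Dv Dwv : V -> R) (p v w : V) (s : R) :
  (forall y, is_derive y v f (Dv y)) -> (forall y, is_derive y w Dv (Dwv y)) -> 0 < s ->
  exists xi, exists eta, [/\ 0 < xi < s, 0 < eta < s &
     f (p + s *: w + s *: v) - f (p + s *: v) - (f (p + s *: w) - f p)
       = s * s * Dwv (p + xi *: v + eta *: w)].
Proof.
move=> Hf Hd s0.
pose phi := fun x : R => f (p + s *: w + x *: v) - f (p + x *: v).
have dphi : forall x : R, is_derive x 1 phi (Dv (p + s *: w + x *: v) - Dv (p + x *: v)).
  move=> x; have := is_deriveB (line_is_derive (p + s *: w) x Hf) (line_is_derive p x Hf).
  exact.
have cphi : {within `[0, s], continuous phi}.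
  by apply: derivable_within_continuous => x _; case: (dphi x).
have [xi xiI E1] := MVT s0 (fun x _ => dphi x) cphi.
pose psi := fun y : R => Dv (p + xi *: v + y *: w).
have dpsi : forall y : R, is_derive y 1 psi (Dwv (p + xi *: v + y *: w)).
  by move=> y; apply: line_is_derive.
have cpsi : {within `[0, s], continuous psi}.
  by apply: derivable_within_continuous => x _; case: (dpsi x).
have [eta etaI E2] := MVT s0 (fun x _ => dpsi x) cpsi.
exists xi, eta; split.
- by move: xiI; rewrite in_itv.
- by move: etaI; rewrite in_itv.
move: E1 E2; rewrite /phi /psi !scale0r !addr0 subr0 => ->.
rewrite [p + s *: w + xi *: v]addrAC => ->; ring.
Qed.

End Schwarz.

Section Schwarz2.
Variable R : realType.

Lemma ball_lemma (V : normedModType R) (p v w : V) (d : R) (xi eta s : R) :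
  0 < d -> s = d / (`|v| + `|w| + 1) -> 0 < xi < s -> 0 < eta < s ->
  ball p d (p + xi *: v + eta *: w).
Proof.
move=> d0 sE /andP[xi0 xis] /andP[eta0 etas].
rewrite -ball_normE /= -addrA opprD addrA subrr add0r normrN.
have nv := normr_ge0 v; have nw := normr_ge0 w.
have h1 : `|xi *: v + eta *: w| <= xi * `|v| + eta * `|w|.
  by apply: (le_trans (ler_normD _ _)); rewrite !normrZ !gtr0_norm.
apply: (le_lt_trans h1).
have pos : 0 < `|v| + `|w| + 1 by rewrite ltr_wpDl // addr_ge0.
have dE : d = s * (`|v| + `|w| + 1) by rewrite sE divfK // gt_eqF.
rewrite dE; nra.
Qed.

Lemma schwarz_scalar (V : normedModType R) (f Dv Dw Dwv Dvw : V -> R) (p v w : V) :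
  (forall y, is_derive y v f (Dv y)) -> (forall y, is_derive y w f (Dw y)) ->
  (forall y, is_derive y w Dv (Dwv y)) -> (forall y, is_derive y v Dw (Dvw y)) ->
  {for p, continuous Dwv} -> {for p, continuous Dvw} -> Dwv p = Dvw p.
Proof.
move=> Hv Hw Hwv Hvw C1 C2.
have key : forall s, 0 < s -> exists xi eta xi' eta',
   [/\ 0 < xi < s, 0 < eta < s, 0 < xi' < s, 0 < eta' < s &
    Dwv (p + xi *: v + eta *: w) = Dvw (p + xi' *: w + eta' *: v)].
  move=> s s0.
  have [xi [eta [h1 h2 E1]]] := two_mvt p Hv Hwv s0.
  have [xi' [eta' [h1' h2' E2]]] := two_mvt p Hw Hvw s0.
  exists xi, eta, xi', eta'; split => //.
  have sn : s != 0 by rewrite gt_eqF.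
  have ss : s * s != 0 by apply: mulf_neq0.
  apply: (mulfI ss); rewrite -E1 -E2 [p + s *: v + s *: w]addrAC; ring.
apply/eqP; rewrite -subr_eq0; apply/negPn/negP => hne.
set d := Dwv p - Dvw p.
have e0 : 0 < `|d| / 2 by rewrite divr_gt0 // normr_gt0.
have N1 : \forall t \near p, `|Dwv p - Dwv t| < `|d| / 2.
  by move: C1 => /cvgrPdist_lt; apply.
have N2 : \forall t \near p, `|Dvw p - Dvw t| < `|d| / 2.
  by move: C2 => /cvgrPdist_lt; apply.
have [del del0 Hdel] := (nbhs_ballP _ _).1 (filterI N1 N2).
pose s := del / (`|v| + `|w| + 1).
have pos : 0 < `|v| + `|w| + 1 by rewrite ltr_wpDl // addr_ge0.
have s0 : 0 < s by rewrite divr_gt0.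
have [xi [eta [xi' [eta' [i1 i2 i3 i4 E]]]]] := key s s0.
have [B1 _] := Hdel _ (@ball_lemma _ p v w del xi eta s del0 erefl i1 i2).
have sE2 : s = del / (`|w| + `|v| + 1) by rewrite /s [`|w| + `|v|]addrC.
have [_ B2] := Hdel _ (@ball_lemma _ p w v del xi' eta' s del0 sE2 i3 i4).
have dE : d = (Dwv p - Dwv (p + xi *: v + eta *: w)) - (Dvw p - Dvw (p + xi' *: w + eta' *: v)).
  by rewrite /d E; ring.
have : `|d| < `|d|.
  rewrite {1}dE; apply: (le_lt_trans (ler_normB _ _)).
  by have := ltrD B1 B2; rewrite -splitr.
by rewrite ltxx.
Qed.

End Schwarz2.

Section Mx.
Variables (R : realType) (n : nat).
Local Notation V := 'rV[R]_n.

Lemma schwarz_smooth (g : V -> V) (p v w : V) : smooth g ->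
  'D_w (fun z => 'D_v g z) p = 'D_v (fun z => 'D_w g z) p.
Proof.
move=> sm; apply/matrixP => i j.
have dg : forall (y u : V), is_derive y u g ('D_u g y).
  by move=> y u; apply: derivableP; apply: diff_derivable; exact: (sm [::] y).
have d2 : forall (y a b : V), is_derive y b (fun z => 'D_a g z) ('D_b (fun z => 'D_a g z) y).
  by move=> y a b; apply: derivableP; apply: diff_derivable; exact: (sm [:: a] y).
have cc : forall a b : V, {for p, continuous (fun y => 'D_b (fun z => 'D_a g z) y i j)}.
  move=> a b; apply: (@continuous_comp _ _ _ (fun y => 'D_b (fun z => 'D_a g z) y) (fun M : 'M[R]_(1, n) => M i j)).
    exact: differentiable_continuous (sm [:: b; a] p).
  exact: coord_continuous.
apply: (@schwarz_scalar R V (fun y => g y i j) (fun y => 'D_v g y i j) (fun y => 'D_w g y i j)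
  (fun y => 'D_w (fun z => 'D_v g z) y i j) (fun y => 'D_v (fun z => 'D_w g z) y i j) p v w).
- by move=> y; apply: is_derive_coord.
- by move=> y; apply: is_derive_coord.
- by move=> y; apply: (is_derive_coord i j (d2 y v w)).
- by move=> y; apply: (is_derive_coord i j (d2 y w v)).
- exact: cc.
- exact: cc.
Qed.

Lemma is_derive_mulmx_coord (W : normedModType R) m (M : 'M[R]_(n, m)) (F : W -> V) x w dF k :
  is_derive x w F dF -> is_derive x w (fun y => (F y *m M) 0 k) ((dF *m M) 0 k).
Proof.
move=> dF'.
have E : (fun y => (F y *m M) 0 k) = \sum_(l < n) (M l k \*: (fun y => F y 0 l)).
  by apply/funext => y; rewrite fct_sumE mxE; apply: eq_bigr => l _; rewrite /= mulrC.
rewrite E; apply: is_derive_eq.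
  by apply: is_derive_sum => l; apply: is_deriveZ; apply: is_derive_coord.
by rewrite mxE; apply: eq_bigr => l _; rewrite mulrC.
Qed.

Lemma is_derive_beta (W : normedModType R) (M : 'M[R]_n) (F G : W -> V) x w dF dG :
  is_derive x w F dF -> is_derive x w G dG ->
  is_derive x w (fun y => (F y *m M *m (G y)^T) 0 0)
    ((dF *m M *m (G x)^T) 0 0 + (F x *m M *m dG^T) 0 0).
Proof.
move=> dF' dG'.
have E : (fun y => (F y *m M *m (G y)^T) 0 0) =
   \sum_(k < n) ((fun y => (F y *m M) 0 k) * (fun y => G y 0 k)).
  by apply/funext => y; rewrite fct_sumE mxE; apply: eq_bigr => k _ /=; rewrite mulrfctE [(G y)^T _ _]mxE.
rewrite E; apply: is_derive_eq.
  apply: is_derive_sum => k; apply: is_deriveM.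
    exact: is_derive_mulmx_coord.
  exact: is_derive_coord.
have sc : forall a b : R, a *: b = a * b by [].
rewrite !mxE -big_split /=; apply: eq_bigr => k _.
by rewrite !sc [(G x)^T _ _]mxE [dG^T _ _]mxE addrC [G x 0 k * _]mulrC.
Qed.

Lemma is_derive_linmx (M : 'M[R]_n) (z v : V) : is_derive z v (linmx M) (v *m M).
Proof.
apply: is_derive_cvgP; apply: cvg_near_cst.
rewrite near_withinE; near=> h => hN0 /=.
by rewrite /linmx mulmxDl addrK scalemxAl scalerA mulVf // scale1r.
Unshelve. all: by end_near. Qed.

Lemma differentiable_linmx (M : 'M[R]_n) (z : V) : differentiable (linmx M) z.
Proof.
have E : linmx M = \sum_(i < n) (fun x : V => x 0 i *: row i M).
  by apply/funext => x; rewrite fct_sumE /linmx mulmx_sum_row.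
rewrite E; apply: differentiable_sum => i; apply: differentiableZl.
exact: differentiable_coord.
Qed.

Lemma diff_linmx (M : 'M[R]_n) (z v : V) : 'd (linmx M) z v = v *m M.
Proof.
have [_ E] := is_derive_linmx M z v.
by rewrite -deriveE ?E //; exact: differentiable_linmx.
Qed.

Lemma smooth_linmx (M : 'M[R]_n) : smooth (linmx M).
Proof.
have H : forall vs, iter_deriv (linmx M) vs = linmx M \/ exists c, iter_deriv (linmx M) vs = cst c.
  elim=> [|v vs [IH|[c IH]]]; first by left.
  - right; exists (v *m M); apply/funext => z /=; rewrite IH.
    by have [_ ->] := is_derive_linmx M z v.
  - right; exists 0; apply/funext => z /=; rewrite IH.
    exact: derive_cst.
move=> vs z; case: (H vs) => [->|[c ->]].
  exact: differentiable_linmx.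
exact: differentiable_cst.
Qed.

End Mx.

Section Alg.
Variables (R : realType) (n : nat).
Local Notation V := 'rV[R]_n.
Implicit Types (Om A : 'M[R]_n) (x y z : V).

Lemma sformDl Om x y z : sform Om (x + y) z = sform Om x z + sform Om y z.
Proof. by rewrite /sform !mulmxDl mxE. Qed.
Lemma sformNl Om x z : sform Om (- x) z = - sform Om x z.
Proof. by rewrite /sform !mulNmx mxE. Qed.
Lemma sformBl Om x y z : sform Om (x - y) z = sform Om x z - sform Om y z.
Proof. by rewrite sformDl sformNl. Qed.
Lemma sformDr Om x y z : sform Om z (x + y) = sform Om z x + sform Om z y.
Proof. by rewrite /sform linearD /= mulmxDr mxE. Qed.
Lemma sformNr Om x z : sform Om z (- x) = - sform Om z x.
Proof. by rewrite /sform linearN /= mulmxN mxE. Qed.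
Lemma sform0r Om x : sform Om x 0 = 0.
Proof. by rewrite /sform trmx0 mulmx0 mxE. Qed.

Lemma sform_antisym Om x y : (forall x, sform Om x x = 0) -> sform Om x y = - sform Om y x.
Proof.
move=> halt; have := halt (x + y).
rewrite sformDl !sformDr !halt add0r addr0 => /eqP; rewrite addr_eq0 => /eqP.
done.
Qed.

Definition beta Om A x y := (x *m ((1 - A) *m Om) *m y^T) 0 0.

Lemma betaE Om A x y : beta Om A x y = sform Om (x - linmx A x) y.
Proof. by rewrite /beta /sform /linmx mulmxA mulmxBr mulmx1. Qed.

Lemma beta_swap Om A x y : (forall x, sform Om x x = 0) ->
  (forall x y, sform Om (linmx A x) y + sform Om x (linmx A y) = 0) ->
  beta Om A x y - beta Om A y x = 2 * sform Om x y.
Proof.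
move=> halt hA; rewrite !betaE !sformBl.
rewrite (sform_antisym y x halt) (sform_antisym (linmx A y) x halt).
have := hA x y => /eqP; rewrite addr_eq0 => /eqP ->.
ring.
Qed.

Lemma sform_nondeg Om x : Om \in unitmx -> (forall y, sform Om x y = 0) -> x = 0.
Proof.
move=> uOm H; have := H (x *m Om); rewrite /sform.
set u := x *m Om => H0.
have u0 : u = 0.
  apply/matrixP => i j; rewrite (ord1 i) [RHS]mxE.
  move: H0; rewrite mxE => /eqP; rewrite psumr_eq0; last first.
    by move=> k _; rewrite [u^T _ _]mxE -expr2 sqr_ge0.
  move=> /allP /(_ j (mem_index_enum j)); rewrite [u^T _ _]mxE -expr2 sqrf_eq0 => /implyP.
  by move=> /(_ isT) /eqP.
by rewrite -(mulmxK uOm x) -/u u0 mul0mx.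
Qed.

End Alg.

Section Forward.
Variables (R : realType) (n : nat).
Local Notation V := 'rV[R]_n.
Variables (Om A : 'M[R]_n) (g h : V -> V).
Implicit Types (x y z : V).

Lemma key_eq : smooth g -> preserves_theta Om A g ->
  forall z v, beta Om A (g z) ('D_v g z) = beta Om A z v.
Proof.
move=> sm pt z v; have := pt z v; rewrite /thetaA -deriveE; last exact: (sm [::] z).
rewrite !betaE => E; by apply: (mulfI (_ : 2^-1 != 0)).
Qed.

Lemma sympl : (forall x, sform Om x x = 0) ->
  (forall x y, sform Om (linmx A x) y + sform Om x (linmx A y) = 0) ->
  smooth g -> preserves_theta Om A g ->
  forall z v w, sform Om ('D_w g z) ('D_v g z) = sform Om w v.
Proof.
move=> halt hA sm pt z v w.
have dg : forall (y u : V), is_derive y u g ('D_u g y).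
  by move=> y u; apply: derivableP; apply: diff_derivable; exact: (sm [::] y).
have d2 : forall (y a b : V), is_derive y b (fun z => 'D_a g z) ('D_b (fun z => 'D_a g z) y).
  by move=> y a b; apply: derivableP; apply: diff_derivable; exact: (sm [:: a] y).
have D : forall a b, 'D_b (fun y => beta Om A (g y) ('D_a g y)) z =
   beta Om A ('D_b g z) ('D_a g z) + beta Om A (g z) ('D_b (fun y => 'D_a g y) z).
  by move=> a b; rewrite /beta; have [_ ->] := is_derive_beta ((1 - A) *m Om) (dg z b) (d2 z a b).
have D' : forall a b, 'D_b (fun y => beta Om A (g y) ('D_a g y)) z = beta Om A b a.
  move=> a b; rewrite (_ : (fun y => beta Om A (g y) ('D_a g y)) = (fun y => beta Om A y a)); last first.
    by apply/funext => y; apply: key_eq.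
  rewrite /beta; have [_ ->] := is_derive_beta ((1 - A) *m Om) (is_derive_id z b) (is_derive_cst a z b).
  by rewrite trmx0 mulmx0 [X in _ + X]mxE addr0.
have E1 := D v w; rewrite D' in E1.
have E2 := D w v; rewrite D' in E2.
rewrite (@schwarz_smooth R n g z v w sm) in E1.
have S1 := @beta_swap R n Om A ('D_w g z) ('D_v g z) halt hA.
have S2 := @beta_swap R n Om A w v halt hA.
have T : 2 * sform Om ('D_w g z) ('D_v g z) = 2 * sform Om w v.
  by rewrite -S1 -S2 E1 E2; ring.
by apply: (mulfI (_ : 2 != 0)).
Qed.

Lemma surj : smooth g -> smooth h -> cancel g h -> cancel h g ->
  forall z y, 'D_('D_y h (g z)) g z = y.
Proof.
move=> sm smh gh hg z y.
have dhz : differentiable h (g z) := smh [::] (g z).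
have dgz : differentiable g (h (g z)) by rewrite gh; exact: (sm [::] z).
have E : g \o h = id by apply/funext => t; exact: hg.
have : 'D_y (g \o h) (g z) = y by rewrite E derive_id.
rewrite (deriveE _ (differentiable_comp dhz dgz)) (diff_comp dhz dgz) /=.
rewrite (deriveE _ (sm [::] z)) (deriveE _ dhz).
by rewrite gh.
Qed.

Lemma equivariance : (forall x, sform Om x x = 0) -> Om \in unitmx ->
  (forall x y, sform Om (linmx A x) y + sform Om x (linmx A y) = 0) ->
  smooth g -> smooth h -> cancel g h -> cancel h g -> preserves_theta Om A g ->
  forall z, 'D_(z - linmx A z) g z = g z - linmx A (g z).
Proof.
move=> halt uOm hA sm smh gh hg pt z.
apply/eqP; rewrite eq_sym -subr_eq0; apply/eqP; apply: (sform_nondeg uOm) => y.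
rewrite -(surj sm smh gh hg z y) sformBl.
rewrite (sympl halt hA sm pt) -betaE key_eq // betaE.
by rewrite subrr.
Qed.

End Forward.

Section Flow.
Variables (R : realType) (n : nat).
Local Notation V := 'rV[R]_n.

Lemma is_derive_expN (s : R) : is_derive s 1 (fun t : R => expR (- t)) (expR (- s) * -1).
Proof.
have := is_derive1_comp (f:=expR) (g:=fun t : R => - t) (is_derive_expR (- s)) (is_deriveNid s 1).
exact.
Qed.

Lemma flow_homog (A : 'M[R]_n) (g : V -> V) : smooth g ->
  (forall x, linmx A (linmx A x) = - x) ->
  (forall z, 'D_(z - linmx A z) g z = g z - linmx A (g z)) ->
  forall z, expR (pi *+ 2) *: g (expR (- (pi *+ 2)) *: z) = g z.
Proof.
move=> sm hA2 EQ z.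
have AA : forall x : V, x *m A *m A = - x by exact: hA2.
pose a := fun s : R => expR s * cos s.
pose b := fun s : R => expR s * sin s.
have da : forall s : R, is_derive s 1 a (expR s *: - sin s + cos s *: expR s).
  by move=> s; have := is_deriveM (is_derive_expR s) (is_derive_cos s); exact.
have db : forall s : R, is_derive s 1 b (expR s *: cos s + sin s *: expR s).
  by move=> s; have := is_deriveM (is_derive_expR s) (is_derive_sin s); exact.
pose phi := fun s : R => a s *: z - b s *: (z *m A).
have dphi : forall s : R, is_derive s 1 phi (phi s - phi s *m A).
  move=> s.
  have H : is_derive s 1 phi ((expR s *: - sin s + cos s *: expR s) *: z - (expR s *: cos s + sin s *: expR s) *: (z *m A)).
    exact: (is_deriveB (is_deriveZl z (da s)) (is_deriveZl (z *m A) (db s))).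
  apply: (is_derive_eq H).
  rewrite /phi /a /b mulmxBl -!scalemxAl AA.
  apply/matrixP => i j; rewrite !mxE.
  have sc : forall a b : R, a *: b = a * b by [].
  by rewrite !sc; ring.
pose u := fun s : R => g (phi s).
have du : forall s : R, is_derive s 1 u (u s - u s *m A).
  move=> s; have H : is_derive s 1 u ('d g (phi s) (phi s - phi s *m A)).
    exact: (is_derive_comp1 (sm [::] (phi s)) (dphi s)).
  apply: (is_derive_eq H); rewrite -deriveE; last exact: (sm [::] (phi s)).
  exact: EQ.
pose p := fun s : R => expR (- s) * cos s.
pose q := fun s : R => expR (- s) * sin s.
have dp : forall s : R, is_derive s 1 p (expR (- s) *: - sin s + cos s *: (expR (- s) * -1)).
  by move=> s; have := is_deriveM (is_derive_expN s) (is_derive_cos s); exact.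
have dq : forall s : R, is_derive s 1 q (expR (- s) *: cos s + sin s *: (expR (- s) * -1)).
  by move=> s; have := is_deriveM (is_derive_expN s) (is_derive_sin s); exact.
apply/matrixP => i j; rewrite (ord1 i).
pose K := fun s : R => p s * u s 0 j + q s * (u s *m A) 0 j.
have dK : forall s : R, is_derive s 1 K 0.
  move=> s.
  have H := is_deriveD (is_deriveM (dp s) (is_derive_coord 0 j (du s)))
     (is_deriveM (dq s) (@is_derive_mulmx_coord R n R n A u s 1 _ j (du s))).
  have H' : is_derive s 1 K _ := H.
  apply: (is_derive_eq H').
  have sc : forall a b : R, a *: b = a * b by [].
  rewrite mulmxBl AA !sc !mxE.
  by rewrite /p /q; ring.
have KC := @is_derive_0_is_cst R K (- (pi *+ 2)) 0 dK.
move: KC; rewrite /K /p /q /u /phi /a /b opprK cosN sinN cos2pi sin2pi expR0 cos0 sin0 oppr0.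
rewrite !mulr0 !mulr1 !mul0r !scale0r !scale1r !subr0 !addr0 mxE.
by rewrite expR0 mul1r.
Qed.

End Flow.

Section Lin.
Variables (R : realType) (n : nat).
Local Notation V := 'rV[R]_n.

Lemma cvg_dnbhs0 (u : nat -> R) : u @ \oo --> 0 -> (forall k, u k != 0) -> u @ \oo --> (0 : R)^'.
Proof.
move=> H nz A HA.
have H2 : \forall k \near \oo, (u k != 0 -> A (u k)) := H _ HA.
by apply: filterS H2 => k Hk; exact: Hk (nz k).
Qed.

Lemma homog_linear (g : V -> V) (c : R) : 0 < c < 1 -> differentiable g 0 ->
  (forall z, g (c *: z) = c *: g z) -> forall z, g z = 'D_z g 0.
Proof.
move=> /andP[c0 c1] dg H z.
have g0 : g 0 = 0.
  have := H 0; rewrite scaler0 => /eqP; rewrite -subr_eq0 -{1}[g 0]scale1r -scalerBl.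
  by rewrite scaler_eq0 subr_eq0 eq_sym (lt_eqF c1) /= => /eqP.
have Hk : forall k, g (c ^+ k *: z) = c ^+ k *: g z.
  elim=> [|k IH]; first by rewrite expr0 !scale1r.
  by rewrite exprS -scalerA H IH scalerA.
have Q := is_derive_cvg (derivableP (diff_derivable (v:=z) dg)).
have hk : (fun k => c ^+ k) @ \oo --> (0 : R)^'.
  apply: cvg_dnbhs0; first by apply: cvg_expr; rewrite gtr0_norm.
  by move=> k; rewrite expf_neq0 // gt_eqF.
have C := cvg_comp _ _ hk Q.
have E : (fun h : R => h^-1 *: (g (h *: z + 0) - g 0)) \o (fun k => c ^+ k) = cst (g z).
  apply/funext => k /=; rewrite addr0 g0 subr0 Hk scalerA mulVf ?scale1r //.
  by rewrite expf_neq0 // gt_eqF.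
rewrite E in C.
exact: (cvg_unique _ (cvg_cst (g z)) C).
Qed.

End Lin.

Unset Implicit Arguments.

Theorem theorem3 (R : realType) (n : nat) (Om A : 'M[R]_n) :
  symplectic_form Om ->
  (forall x y : 'rV[R]_n, sform Om (linmx A x) y + sform Om x (linmx A y) = 0) ->
  (forall x : 'rV[R]_n, linmx A (linmx A x) = - x) ->
  Aut_theta Om A = [set g | Sp Om g /\ g \o linmx A = linmx A \o g].
Proof.
move=> [halt uOm] hA hA2.
apply/seteqP; split => g /=.
- move=> [[sm [h [gh hg smh]]] pt].
  have EQ := @equivariance R n Om A g h halt uOm hA sm smh gh hg pt.
  have FH := @flow_homog R n A g sm hA2 EQ.
  set c : R := expR (- (pi *+ 2)).
  have c01 : 0 < c < 1.
    have p0 : 0 < pi *+ 2 :> R by rewrite mulr2n; have := @pi_gt0 R; lra.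
    by rewrite expR_gt0 /= expR_lt1 oppr_lt0.
  have Hc : forall z, g (c *: z) = c *: g z.
    move=> z; rewrite -(FH z) scalerA /c expRN mulVf ?scale1r //.
    by rewrite gt_eqF // expR_gt0.
  have dg0 : differentiable g 0 := sm [::] 0.
  have L := homog_linear c01 dg0 Hc.
  pose M := lin1_mx ('d g 0).
  have gM : g = linmx M.
    by apply/funext => z; rewrite L (deriveE _ dg0) /linmx mul_rV_lin1.
  have g0 : g 0 = 0 by rewrite gM /linmx mul0mx.
  split.
  + exists M; split => //.
    * rewrite -row_free_unit; apply: inj_row_free => v Hv.
      have : g v = 0 by rewrite gM.
      by move=> /(congr1 h); rewrite gh => ->; rewrite -{1}g0 gh.
    * by move=> x y; rewrite !L; exact: (@sympl R n Om A g halt hA sm pt).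
  + apply/funext => x /=.
    have E := EQ x; rewrite gM in E.
    have [_ E2] := is_derive_linmx M x (x - linmx A x).
    move: E; rewrite E2 /linmx mulmxBl => /addrI /oppr_inj E.
    by rewrite gM /linmx E.
- move=> [[M [uM gE Hsp]] comm].
  rewrite gE in comm Hsp *.
  split.
  + split; first exact: smooth_linmx.
    exists (linmx (invmx M)); split; last exact: smooth_linmx.
    * by move=> x; rewrite /linmx mulmxK.
    * by move=> x; rewrite /linmx mulmxKV.
  + move=> z v; rewrite /thetaA diff_linmx.
    have cz : linmx M (linmx A z) = linmx A (linmx M z).
      by have := congr1 (fun f => f z) comm.
    rewrite -cz (_ : linmx M z - linmx M (linmx A z) = linmx M (z - linmx A z)); last first.
      by rewrite /linmx mulmxBl.
    by rewrite -[v *m M]/(linmx M v) Hsp.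
Qed.
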